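(* The $q$-central Delannoy numbers $D_n(q)=\sum_{k=0}^n\binom{n+k}{n-k}\binom{2k}{k}q^{n-k}$, $n\ge 0$, form a $q$-log-convex sequence.
   Context: For real polynomials $f,g$ write $f\le_q g$ if $g-f$ has nonnegative coefficients; a sequence $\{P_n(q)\}_{n\ge0}$ is $q$-log-convex if $P_n(q)^2\le_q P_{n-1}(q)P_{n+1}(q)$ for all $n\ge 1$. *)

(* Defs.v *)
From mathcomp Require Import all_boot all_order all_algebra.
Set Implicit Arguments. Unset Strict Implicit. Unset Printing Implicit Defensive.
Import Order.TTheory GRing.Theory Num.Theory.
Local Open Scope ring_scope.

Definition q_le (R : realDomainType) (f g : {poly R}) : Prop :=
  forall i : nat, 0 <= (g - f)`_i.

Definition q_log_convex (R : realDomainType) (P : nat -> {poly R}) : Prop :=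
  forall n : nat, (1 <= n)%N -> q_le (P n ^+ 2) (P n.-1 * P n.+1).

Definition qDelannoy (R : realDomainType) (n : nat) : {poly R} :=
  \sum_(0 <= k < n.+1) ('C(n + k, n - k) * 'C(k.*2, k))%:R *: 'X^(n - k).

(* Main.v *)
Require Import Defs.
From mathcomp Require Import all_boot all_order all_algebra.
From mathcomp Require Import ring lra zify.
Set Implicit Arguments. Unset Strict Implicit. Unset Printing Implicit Defensive.
Import Order.TTheory GRing.Theory Num.Theory.
Local Open Scope ring_scope.

Lemma binid n k : (k <= n)%N ->
  ('C(n + k, n - k) * 'C(k.*2, k) = 'C(n, k) * 'C(n + k, k))%N.
Proof.
move=> kn.
have p : (0 < (n - k)`! * (k`! * k`!))%N by rewrite !muln_gt0 !fact_gt0.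
apply/eqP; rewrite -(eqn_pmul2r p); apply/eqP.
have h1 := bin_fact (leq_addl k n).
have h2 : ('C(n + k, n - k) * ((n - k)`! * (k.*2)`!) = (n + k)`!)%N.
  have := bin_fact (m := n - k) (n := n + k) ltac:(lia).
  by have -> : (n + k - (n - k) = k.*2)%N by lia.
have h3 : ('C(k.*2, k) * (k`! * k`!) = (k.*2)`!)%N.
  have := bin_fact (m := k) (n := k.*2) ltac:(lia).
  by have -> : (k.*2 - k = k)%N by lia.
have h4 := bin_fact kn.
have h5 : ('C(n + k, k) * (k`! * n`!) = (n + k)`!)%N.
  have := bin_fact (m := k) (n := n + k) ltac:(lia).
  by have -> : (n + k - k = n)%N by lia.
transitivity ((n+k)`!).
  by rewrite -h2 -h3; ring.
by rewrite -h5 -h4; ring.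
Qed.

Definition cc n k : nat := ('C(n, k) * 'C(n + k, k))%N.

Local Open Scope nat_scope.
Lemma cc_small n k : n < k -> cc n k = 0.
Proof. by move=> h; rewrite /cc bin_small. Qed.

Lemma cc0 n : cc n 0 = 1.
Proof. by rewrite /cc !bin0. Qed.

Lemma R1 n k : (n.+1 - k) * cc n.+1 k = (n + k).+1 * cc n k.
Proof.
rewrite /cc.
have h1 := mul_bin_down n.+1 k.
have h2 := mul_bin_down (n + k).+1 k.
rewrite /= in h1 h2.
have e : ((n + k).+1 - k = n.+1)%N by lia.
rewrite e in h2. rewrite addSn.
transitivity ((n.+1 - k) * 'C(n.+1, k) * 'C((n + k).+1, k)); first ring.
rewrite -h1.
transitivity ('C(n, k) * (n.+1 * 'C((n + k).+1, k))); first ring.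
rewrite -h2; ring.
Qed.

Lemma R2 m k : (m + k).+1 * (m - k) * cc m k = k.+1 ^ 2 * cc m k.+1.
Proof.
rewrite /cc.
have h1 := mul_bin_left m k.
have h2 := mul_bin_diag (m + k).+1 k.
rewrite /= in h2. rewrite addnS.
transitivity (((m - k) * 'C(m, k)) * ((m + k).+1 * 'C(m + k, k))); first ring.
rewrite -h1 h2; ring.
Qed.

Lemma core n k :
  n.+2 * cc n.+2 k + n.+1 * cc n k =
  (n.*2).+3 * (cc n.+1 k + 2 * (if k is j.+1 then cc n.+1 j else 0)).
Proof.
case: k => [|j]; first by rewrite !cc0; lia.
case: (leqP j n) => hj.
  have [m ->] : exists m, n = j + m by exists (n - j); lia.
  have a1 := R1 (j + m) j.+1.
  have a2 := R1 (j + m).+1 j.+1.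
  have a3 := R2 (j + m).+1 j.
  have e1 : ((j + m).+1 - j.+1 = m)%N by lia.
  have e2 : ((j + m).+2 - j.+1 = m.+1)%N by lia.
  have e3 : ((j + m).+1 - j = m.+1)%N by lia.
  rewrite e1 in a1; rewrite e2 in a2; rewrite e3 in a3.
  set A := cc (j + m) j.+1 in a1 *.
  set B := cc (j + m).+1 j.+1 in a1 a2 a3 *.
  set C := cc (j + m).+2 j.+1 in a2 *.
  set P := cc (j + m).+1 j in a3 *.
  have b1 : m * B = (j + j + m).+2 * A by rewrite a1; congr (_ * _); lia.
  have b2 : m.+1 * C = (j + j + m).+3 * B by rewrite a2; congr (_ * _); lia.
  have b3 : (j + j + m).+2 * m.+1 * P = j.+1 ^ 2 * B
    by rewrite -a3; congr (_ * _ * _); lia.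
  have p : 0 < (j + j + m).+2 * m.+1 by rewrite muln_gt0.
  apply/eqP; rewrite -(eqn_pmul2l p); apply/eqP.
  transitivity ((j + j + m).+2 * (j+m).+2 * (m.+1 * C) + m.+1 * (j+m).+1 * ((j + j + m).+2 * A)); first ring.
  rewrite b2 -b1.
  transitivity ((j + m).*2.+3 * ((j + j + m).+2 * m.+1 * B + 2 * ((j + j + m).+2 * m.+1 * P))); last ring.
  rewrite b3.
  have -> : (j + m).*2 = (j + m) + (j + m) by lia.
  ring.
case: (leqP j n.+1) => hj2.
  have -> : j = n.+1 by lia.
  rewrite (cc_small (n := n) (k := n.+2)) // (cc_small (n := n.+1) (k := n.+2)) //.
  have a2 := R1 n.+1 n.+1.
  have a3 := R2 n.+2 n.+1.
  rewrite subSnn in a2. have e : (n.+2 - n.+1 = 1)%N by lia. rewrite e in a3.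
  have p : 0 < n.+2 by [].
  apply/eqP; rewrite -(eqn_pmul2l p); apply/eqP.
  transitivity (n.+2 ^ 2 * cc n.+2 n.+2); first ring.
  rewrite -a3.
  transitivity ((n.+2 + n.+1).+1 * (1 * cc n.+2 n.+1)); first ring.
  rewrite a2.
  have -> : n.*2 = n + n by lia.
  rewrite !addSn !addnS; ring.
rewrite !cc_small //; lia.
Qed.
Local Open Scope ring_scope.
Lemma coefQD (R : realDomainType) n i :
  (qDelannoy R n)`_i = if (i <= n)%N then (cc n (n - i))%:R else 0.
Proof.
rewrite /qDelannoy coef_sum.
under eq_bigr => k _ do rewrite coefZ coefXn.
case: ifP => hi.
  rewrite (bigD1_seq (n - i)%N) /=; first last.
  - exact: (iota_uniq 0 n.+1).
  - by rewrite mem_index_iota; lia.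
  rewrite big1_seq ?addr0.
    rewrite binid ?leq_subr // /cc.
    have -> : (i == n - (n - i))%N by apply/eqP; lia.
    by rewrite mulr1.
  move=> k /andP [hk]; rewrite mem_index_iota => hk2.
  have -> : (i == n - k)%N = false by apply/negbTE; apply/eqP; move/eqP: hk; lia.
  by rewrite mulr0.
rewrite big1_seq // => k; rewrite mem_index_iota => hk2.
have -> : (i == n - k)%N = false by apply/negbTE; apply/eqP; move/negbT: hi; lia.
by rewrite mulr0.
Qed.

Section S.
Variable R : realDomainType.
Local Notation D := (@qDelannoy R).

Lemma cD2 n i : (i <= n.+2)%N -> (D n.+2)`_i = (cc n.+2 (n.+2 - i))%:R.
Proof. by move=> h; rewrite coefQD h. Qed.

Lemma cD1 n i : (i <= n.+2)%N -> ('X * D n.+1)`_i = (cc n.+1 (n.+2 - i))%:R.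
Proof.
move=> h; rewrite coefXM; case: eqP => [->|hi].
  by rewrite cc_small.
rewrite coefQD; have -> : (i.-1 <= n.+1)%N by lia.
by have -> : (n.+1 - i.-1 = n.+2 - i)%N by lia.
Qed.

Lemma cD1' n i : (i <= n.+2)%N -> (D n.+1)`_i =
   (if (n.+2 - i)%N is j.+1 then cc n.+1 j else 0%N)%:R.
Proof.
move=> h; rewrite coefQD; case: leqP => hi.
  by have -> : (n.+2 - i = (n.+1 - i).+1)%N by lia.
by have -> : (n.+2 - i = 0)%N by lia.
Qed.

Lemma cD0 n i : (i <= n.+2)%N -> ('X^2 * D n)`_i = (cc n (n.+2 - i))%:R.
Proof.
move=> h; rewrite coefXnM; case: ltnP => hi.
  by rewrite cc_small //; lia.
rewrite coefQD; have -> : (i - 2 <= n)%N by lia.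
by have -> : (n - (i - 2) = n.+2 - i)%N by lia.
Qed.

Lemma rec n : (n.+2)%:R * D n.+2 =
  (n.*2.+3)%:R * (('X + 2) * D n.+1) - (n.+1)%:R * ('X^2 * D n).
Proof.
apply/polyP => i.
rewrite coefB !mulr_natl !coefMn mulrDl coefD mulr_natl coefMn.
case: (leqP i n.+2) => hi.
  rewrite cD2 // cD1 // cD1' // cD0 //.
  apply/eqP; rewrite eq_sym subr_eq; apply/eqP.
  move: (core n (n.+2 - i)); case: (n.+2 - i)%N => [|j] h;
    rewrite !mulrnDl -!mulrnA -!natrD; congr (_%:R); rewrite (mulnC (cc n.+2 _)) (mulnC (cc n _)) h; ring.
rewrite coefXM coefXnM !coefQD.
repeat (case: ifP => ?; first by exfalso; lia).
by rewrite !(mul0rn, addr0, subr0).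
Qed.

Definition nneg (p : {poly R}) := forall i, 0 <= p`_i.

Lemma nnegD p q : nneg p -> nneg q -> nneg (p + q).
Proof. by move=> hp hq i; rewrite coefD addr_ge0. Qed.

Lemma nnegM p q : nneg p -> nneg q -> nneg (p * q).
Proof.
move=> hp hq i; rewrite coefM; apply: sumr_ge0 => j _; exact: mulr_ge0.
Qed.

Lemma nnegN k p : nneg p -> nneg (k%:R * p).
Proof. by move=> hp i; rewrite mulr_natl coefMn mulrn_wge0. Qed.

Lemma nnegN' k p : nneg (k.+1%:R * p) -> nneg p.
Proof. by move=> hp i; have := hp i; rewrite mulr_natl coefMn pmulrn_lge0. Qed.

Lemma nnegX : nneg 'X.
Proof. by move=> i; rewrite coefX ler0n. Qed.

Lemma nneg1 : nneg 1.
Proof. by move=> i; rewrite coefC; case: eqP. Qed.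

Lemma nnegQD n : nneg (D n).
Proof. by move=> i; rewrite coefQD; case: ifP. Qed.

Lemma D0 : D 0 = 1.
Proof.
by apply/polyP => i; rewrite coefQD coefC; case: i => [|i] //=.
Qed.

Lemma D1 : D 1 = 'X + 2.
Proof.
apply/polyP => i; rewrite coefQD coefD coefX -[2]/(2%:R) -polyC_natr coefC.
case: i => [|[|i]] //=; by rewrite /cc /= ?addr0 ?add0r.
Qed.

Definition U n := 2 * ('X + 2) * D n * D n.+1 - 'X^2 * D n ^+ 2 - D n.+1 ^+ 2.

Lemma Urec n : (n.+2)%:R ^+ 2 * U n.+1 =
  (n.+1)%:R ^+ 2 * ('X^2 * U n) + (n.*2.+3)%:R * 4 * ('X + 1) * D n.+1 ^+ 2.
Proof.
have h := rec n.
rewrite /U.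
transitivity (2 * ('X + 2) * D n.+1 * ((n.+2)%:R * D n.+2) * (n.+2)%:R
  - 'X^2 * (n.+2)%:R ^+ 2 * D n.+1 ^+ 2 - ((n.+2)%:R * D n.+2) ^+ 2); first ring.
rewrite h.
have -> : n.*2 = (n + n)%N by lia.
ring.
Qed.

Lemma U0 : U 0 = 4 * ('X + 1).
Proof. rewrite /U D0 D1; ring. Qed.

Lemma Unneg n : nneg (U n).
Proof.
elim: n => [|n IH].
  rewrite U0; apply: (nnegN 4); apply: nnegD; [exact: nnegX | exact: nneg1].
apply: (@nnegN' ((n.+2) ^ 2).-1); rewrite prednK ?expn_gt0 // natrX Urec.
apply: nnegD; first by rewrite -natrX; apply: nnegN; apply: nnegM => //; rewrite expr2; apply: nnegM; exact: nnegX.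
rewrite -!mulrA; apply: nnegN; rewrite -[4]/(4%:R); apply: nnegN.
apply: nnegM; first by apply: nnegD; [exact: nnegX | exact: nneg1].
by rewrite expr2; apply: nnegM; apply: nnegQD.
Qed.

Definition F m := ((m.+1 * m.+2)%N)%:R * (D m * D m.+2 - D m.+1 ^+ 2).

Lemma F0 : F 0 = U 0.
Proof.
have h := rec 0.
rewrite /F /U.
transitivity (D 0 * (2%:R * D 2) - 2%:R * D 1 ^+ 2); first ring.
rewrite h D0 D1; have -> : (0.*2.+3 = 3)%N by []; ring.
Qed.

Lemma Frec m : F m.+1 = 'X^2 * F m + (m.+2)%:R * U m.+1.
Proof.
have h3 := rec m.+1.
have h0 : (m.+1)%:R * ('X^2 * D m) =
   (m.*2.+3)%:R * (('X + 2) * D m.+1) - (m.+2)%:R * D m.+2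
  by rewrite rec; ring.
rewrite /F /U.
transitivity ((m.+2)%:R * D m.+1 * ((m.+3)%:R * D m.+3)
  - (m.+2)%:R * (m.+3)%:R * D m.+2 ^+ 2); first ring.
rewrite h3.
transitivity ((m.+2)%:R * D m.+2 * ((m.+1)%:R * ('X^2 * D m))
  - (m.+1)%:R * (m.+2)%:R * 'X^2 * D m.+1 ^+ 2
  + (m.+2)%:R * (2 * ('X + 2) * D m.+1 * D m.+2 - 'X^2 * D m.+1 ^+ 2 - D m.+2 ^+ 2)); last ring.
rewrite h0.
have -> : (m.+1).*2 = (m + m).+2 by lia.
have -> : m.*2 = (m + m)%N by lia.
ring.
Qed.

Lemma Fnneg m : nneg (F m).
Proof.
elim: m => [|m IH]; first by rewrite F0; apply: Unneg.
rewrite Frec; apply: nnegD; last by apply: nnegN; apply: Unneg.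
apply: nnegM => //; rewrite expr2; apply: nnegM; exact: nnegX.
Qed.

End S.

Theorem corollary4p11 (R : realDomainType) : q_log_convex (@qDelannoy R).
Proof.
move=> [|m] // _ i /=.
have := Fnneg R m i; rewrite /F.
rewrite -[((m.+1 * m.+2)%N)]prednK ?muln_gt0 //.
by rewrite mulr_natl coefMn pmulrn_lge0.
Qed.
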